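(* There exist universal constants $0<c\le C$ such that for all integers $n\ge k\ge 2$ and $r\ge 0$, \[ c\,k(\log(n/k)+r+1)\le \mathsf{opt}_{\operatorname{bandit}}^{\operatorname{det}}(n,k,r)\le C\,k(\log(n/k)+r+1). \]
   Context: Prediction with expert advice: $\mathcal{Y}=\{1,\dots,k\}$, $\mathcal{X}=[k]^n$, experts $h_i(x)=x_i$ for $i=1,\dots,n$. For $r\ge 0$ let $\mathcal{P}_r$ be the set of finite sequences of examples in $\mathcal{X}\times\mathcal{Y}$ on which some $h_i$ errs ($h_i(x)\ne y$) on at most $r$ examples. Online learning with bandit feedback: in rounds $t=1,2,\dots$ the adversary presents $x_t$, a deterministic learner predicts $\hat y_t$ as a function of past observations and $x_t$, and observes only whether $\hat y_t$ equals the true label $y_t$; a mistake is $\hat y_t\ne y_t$. $\mathsf{opt}_{\operatorname{bandit}}^{\operatorname{det}}(n,k,r)$ is the infimum over deterministic learners of the supremum over sequences $S\in\mathcal{P}_r$ of the number of mistakes (equivalently, over adversaries whose bandit feedback is consistent with some expert being inconsistent with the feedback in at most $r$ rounds). *)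

(* Defs.v *)
From HB Require Import structures.
From mathcomp Require Import all_boot all_order all_algebra.
From mathcomp Require Import all_classical all_reals all_analysis.
From mathcomp Require Import Rstruct.
Set Implicit Arguments. Unset Strict Implicit. Unset Printing Implicit Defensive.
Import Order.TTheory GRing.Theory Num.Theory.
Local Open Scope classical_set_scope.
Local Open Scope ring_scope.

(* Labels Y = {1..k} are represented by 'I_k = {0..k-1}; instances X = [k]^n
   by finite functions 'I_n -> 'I_k. Expert i predicts h_i(x) = x i. *)
Definition inst (n k : nat) := {ffun 'I_n -> 'I_k}.
Definition example (n k : nat) := (inst n k * 'I_k)%type.

Definition expert_mistakes (n k : nat) (i : 'I_n) (S : seq (example n k)) : nat :=
  count (fun e : example n k => e.1 i != e.2) S.

Definition P_r (n k r : nat) : set (seq (example n k)) :=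
  [set S | exists i : 'I_n, (expert_mistakes i S <= r)%N].

Definition observation (n k : nat) := (inst n k * 'I_k * bool)%type.

Definition learner (n k : nat) := seq (observation n k) -> inst n k -> 'I_k.

Fixpoint run_mistakes (n k : nat) (L : learner n k) (h : seq (observation n k))
    (S : seq (example n k)) : nat :=
  match S with
  | [::] => 0%N
  | e :: S' =>
      let yhat := L h e.1 in
      ((yhat != e.2) + run_mistakes L (rcons h (e.1, yhat, yhat == e.2)) S')%N
  end.

Definition mistakes (n k : nat) (L : learner n k) (S : seq (example n k)) : nat :=
  run_mistakes L [::] S.

Definition opt_bandit_det (n k r : nat) : \bar Rdefinitions.R :=
  ereal_inf [set ereal_sup [set ((mistakes L S)%:R)%:E | S in @P_r n k r]
            | L in [set: learner n k]].

(* Main.v *)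
Require Import Defs.
From HB Require Import structures.
From mathcomp Require Import all_boot all_order all_algebra.
From mathcomp Require Import all_classical all_reals all_analysis.
From mathcomp Require Import Rstruct.
From mathcomp Require Import zify ring lra.
Import Order.TTheory GRing.Theory Num.Theory.
Set Implicit Arguments. Unset Strict Implicit. Unset Printing Implicit Defensive.
Lemma ceil_mono (a d k : nat) : (1 < k)%N -> ((a + d) %/ k <= a %/ k + d)%N.
Proof.
move=> hk; case: d => [|d]; first by rewrite !addn0.
have h1 := leq_divDl k a d.+1.
have h2 : (d.+1 %/ k < d.+1)%N by apply: ltn_Pdiv.
apply: leq_trans h1 _; by rewrite -addnA leq_add2l addn1.
Qed.

Section LB.
Variables (n k : nat) (L : learner n k.+2).
Local Notation K := k.+2.

Definition A (T m : nat) := forall (h : seq (observation n K)) (V : {set 'I_n}),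
  (m <= #|V|)%N -> exists S (i : 'I_n), [/\ i \in V, expert_mistakes i S = 0%N
     & (T <= run_mistakes L h S)%N].

Lemma A0 : A 0 1.
Proof.
move=> h V; rewrite card_gt0 => /set0Pn [i Hi]; exists [::], i; split => //.
Qed.

Lemma A_mono T m m2 : (m <= m2)%N -> A T m -> A T m2.
Proof. move=> hm HA h V hV; apply: HA; exact: leq_trans hV. Qed.

Definition xinst (V : {set 'I_n}) : inst n K :=
  [ffun i => inord (index i (enum V) %% K)].

Lemma class_small (V : {set 'I_n}) (c : 'I_K) :
  (#|[set i in V | xinst V i == c]| <= (#|V| + K.-1) %/ K)%N.
Proof.
set R := [set i in V | xinst V i == c].
set q := ((#|V| + K.-1) %/ K)%N.
have -> : #|R| = size [seq index i (enum V) | i <- enum R].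
  by rewrite size_map cardE.
suff : (size [seq index i (enum V) | i <- enum R] <= size [seq (c + t * K)%N | t <- iota 0 q])%N.
  by rewrite !size_map size_iota.
apply: uniq_leq_size.
  rewrite map_inj_in_uniq ?enum_uniq // => i j; rewrite !mem_enum !inE.
  move=> /andP[iV _] /andP[jV _] eq; have iV2 : i \in enum V by rewrite mem_enum.
  have jV2 : j \in enum V by rewrite mem_enum.
  exact: (index_inj i iV2 jV2 eq).
move=> z /mapP [i]; rewrite mem_enum inE => /andP[iV /eqP xc] ->.
have Hlt : (index i (enum V) < #|V|)%N by rewrite cardE index_mem mem_enum.
have hmod : (index i (enum V) %% K)%N = c.
  by rewrite -xc ffunE inordK // ltn_mod.
apply/mapP; exists (index i (enum V) %/ K)%N.
  rewrite mem_iota add0n /q.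
  have e : ((index i (enum V) + 1 * K) %/ K = index i (enum V) %/ K + 1)%N by rewrite divnDMl.
  apply: (@leq_trans ((index i (enum V) + 1 * K) %/ K)); first by rewrite e addn1.
  apply: leq_div2r; rewrite mul1n /= addnS -addSn leq_add2r; exact: Hlt.
by rewrite {1}(divn_eq (index i (enum V)) K) hmod addnC.
Qed.

Lemma A_step T m m' : (m' + (m + K.-1) %/ K <= m)%N -> A T m' -> A T.+1 m.
Proof.
move=> hm HA h V hV.
set x := xinst V; set yh := L h x.
set R := [set i in V | x i == yh].
have cR : (#|R| <= (#|V| + K.-1) %/ K)%N by apply: class_small.
have cm := ceil_mono (m + K.-1) (#|V| - m) (isT : (1 < K)%N).
have e1 : (m + K.-1 + (#|V| - m) = #|V| + K.-1)%N by lia.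
rewrite e1 in cm.
have RV : R \subset V by apply/fintype.subsetP => i; rewrite inE => /andP[].
have cV' : #|V :\: R| = (#|V| - #|R|)%N by rewrite cardsD (finset.setIidPr RV).
have hV' : (m' <= #|V :\: R|)%N by rewrite cV'; lia.
have [S [i [iV' em Tle]]] := HA (rcons h (x, yh, false)) _ hV'.
move: iV'; rewrite !inE negb_and => /andP[/orP[iVn|xne] iV]; first by rewrite iV in iVn.
have xi : (yh == x i) = false by apply/negbTE; rewrite eq_sym.
exists ((x, x i) :: S), i; split => //.
  by rewrite /expert_mistakes /= eqxx add0n.
by rewrite /= -/x -/yh xi /= add1n ltnS.
Qed.

Lemma A_phase T m c M p : A T m -> (m + p * c <= M)%N -> ((M + K.-1) %/ K <= c)%N ->
  A (T + p) (m + p * c).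
Proof.
move=> HA hM hc; elim: p hM => [|p IH] hM; first by rewrite addn0 mul0n addn0.
rewrite addnS; apply: (A_step (m' := m + p * c)); last first.
  by apply: IH; apply: leq_trans hM; rewrite leq_add2l leq_mul2r ltnW ?orbT.
have : ((m + p.+1 * c + K.-1) %/ K <= c)%N.
  apply: leq_trans hc; apply: leq_div2r; by rewrite leq_add2r.
rewrite mulSn; lia.
Qed.

Lemma A_pow j : A (K./2 * j) (K * 2 ^ j).
Proof.
elim: j => [|j IH].
  rewrite muln0 expn0 muln1; apply: (A_mono (m := 1)) => //; exact: A0.
have hq : (K./2 * 2 <= K)%N.
  have := odd_double_half K; rewrite -muln2; lia.
have hc : ((K * 2 ^ j.+1 + K.-1) %/ K <= 2 ^ j.+1)%N.
  by rewrite mulnC divnMDl // divn_small ?addn0.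
have hle : (K * 2 ^ j + K./2 * 2 ^ j.+1 <= K * 2 ^ j.+1)%N.
  have h2 := leq_mul hq (leqnn (2 ^ j)).
  rewrite expnS; move: h2; set a := 2 ^ j; set b := K./2; nia.
have H := A_phase (p := K./2) IH hle hc.
rewrite mulnS addnC; exact: (A_mono hle H).
Qed.
End LB.

Section LB2.
Variables (n k r : nat) (L : learner n k.+2).
Local Notation K := k.+2.

Lemma LB_elim j : (K * 2 ^ j <= n)%N ->
  exists S, @P_r n K r S /\ (K./2 * j <= mistakes L S)%N.
Proof.
move=> hn; have hV : (K * 2 ^ j <= #|[set: 'I_n]|)%N by rewrite cardsT card_ord.
have [S [i [_ em le]]] := @A_pow n k L j [::] _ hV.
by exists S; split => //; exists i; rewrite em.
Qed.

Definition x0 : inst n K := [ffun i : 'I_n => inord (i %% K)].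
Fixpoint gen (h : seq (observation n K)) (t : nat) : seq 'I_K :=
  if t is t'.+1 then L h x0 :: gen (rcons h (x0, L h x0, false)) t' else [::].

Lemma run_gen (lab : 'I_K -> 'I_K) : (forall p, lab p != p) ->
  forall t h, run_mistakes L h [seq (x0, lab p) | p <- gen h t] = t.
Proof.
move=> hlab; elim=> [|t IH] h //=.
have -> : (L h x0 == lab (L h x0)) = false by apply/negbTE; rewrite eq_sym hlab.
by rewrite IH add1n.
Qed.

Lemma sum_count (s : seq 'I_K) : (\sum_(c : 'I_K) count (pred1 c) s)%N = size s.
Proof.
elim: s => [|a s IH] /=; first by rewrite big1.
rewrite big_split /= IH (bigD1 a) //= eqxx big1 ?addn0 ?add1n // => c.
by rewrite eq_sym => /negbTE ->.
Qed.

Lemma pigeon (s : seq 'I_K) : (size s < K * r.+1)%N -> exists c, (count (pred1 c) s <= r)%N.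
Proof.
move=> hs; case: (pickP (fun c => count (pred1 c) s <= r)%N) => [c hc|H]; first by exists c.
exfalso; move: hs; rewrite -sum_count ltnNge => /negP; apply.
have -> : (K * r.+1 = \sum_(c : 'I_K) r.+1)%N by rewrite sum_nat_const card_ord.
apply: leq_sum => c _; have := H c; by rewrite /= ltnNge => ->.
Qed.

Lemma LB_r : (K <= n)%N -> exists S, @P_r n K r S /\ (K * r.+1 - 1 <= mistakes L S)%N.
Proof.
move=> hn; set s := gen [::] (K * r.+1 - 1).
have hs : (size s < K * r.+1)%N.
  have -> : size s = (K * r.+1 - 1)%N.
    rewrite /s; elim: (K * r.+1 - 1)%N (@nil (observation n K)) => [|t IH] h //=.
    by rewrite IH.
  by rewrite subn1 ltn_predL muln_gt0.
have [c hc] := pigeon hs.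
pose oth : 'I_K := if c == ord0 then ord_max else ord0.
pose lab (p : 'I_K) := if p == c then oth else c.
have hlab : forall p, lab p != p.
  move=> p; rewrite /lab /oth; have [->|pc] := eqVneq p c; last by rewrite eq_sym.
  by have [->|c0] := eqVneq c ord0; [|rewrite eq_sym].
exists [seq (x0, lab p) | p <- s]; split; last by rewrite /mistakes run_gen.
pose e : 'I_n := Ordinal (leq_trans (ltn_ord c) hn).
have x0e : x0 e = c by apply: val_inj; rewrite ffunE /= inordK ?modn_small ?ltn_mod.
exists e; rewrite /expert_mistakes count_map; apply: leq_trans hc.
rewrite leq_eqVlt; apply/orP; left; apply/eqP; apply: eq_count => p /=.
rewrite x0e; have [->|pc] := eqVneq p c; first by rewrite eq_sym hlab.
by rewrite /lab (negbTE pc) eqxx.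
Qed.
End LB2.

Local Open Scope ring_scope.
Notation RR := Rdefinitions.R.

Definition F (c w : RR) := if w <= c then w else c + c * ln (w / c).

Lemma ln_lb (x : RR) : 0 < x -> ln x <= x - 1.
Proof.
move=> x0; have h := @le_ln1Dx _ (x - 1).
have e : 1 + (x - 1) = x by rewrite addrC subrK.
rewrite e in h; apply: h; lra.
Qed.

Lemma F_ge0 c a : 0 < c -> 0 <= a -> 0 <= F c a.
Proof.
move=> c0 a0; rewrite /F; have [//|ca] := leP a c.
have h : 0 <= ln (a / c) by apply: ln_ge0; rewrite ler_pdivlMr // mul1r; exact: ltW ca.
have := mulr_ge0 (ltW c0) h; lra.
Qed.

Lemma F_mono c a b : 0 < c -> 0 <= a -> a <= b -> F c a <= F c b.
Proof.
move=> c0 a0 ab; rewrite /F.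
have [bc|cb] := leP b c; first by rewrite (le_trans ab bc).
have l0 : 0 <= ln (b / c) by apply: ln_ge0; rewrite ler_pdivlMr // mul1r; exact: ltW cb.
have [ac|ca] := leP a c.
  have := mulr_ge0 (ltW c0) l0; lra.
have h : ln (a / c) <= ln (b / c).
  rewrite ler_ln ?posrE ?divr_gt0 //; try lra.
  by rewrite ler_pM2r ?invr_gt0.
have := ler_wpM2l (ltW c0) h; lra.
Qed.

Lemma F_step c a b : 0 < c -> 0 <= a -> a + 1 <= b -> c * a + b <= c * b ->
  F c a + 1 <= F c b.
Proof.
move=> c0 a0 ab hab; rewrite /F.
have [bc|cb] := leP b c; first by rewrite ifT //; lra.
have b0 : 0 < b by lra.
have [ac|ca] := leP a c.
  have hl : 1 - c / b <= ln (b / c).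
    have := ln_lb (divr_gt0 c0 b0).
    have -> : ln (c / b) = - ln (b / c).
      by rewrite -lnV ?posrE ?divr_gt0 // invf_div.
    lra.
  have h2 : a + 1 - c <= c * (1 - c / b).
    have e : c * (1 - c / b) = (c * b - c * c) / b.
      by field; rewrite gt_eqF.
    rewrite e ler_pdivlMr //.
    have hp : 0 <= (c - a) * (b - c) by apply: mulr_ge0; lra.
    nra.
  have := ler_wpM2l (ltW c0) hl; lra.
have a0' : 0 < a by lra.
have e : ln (a / c) = ln (b / c) + ln (a / b).
  rewrite -lnM ?posrE ?divr_gt0 //; congr ln.
  by field; rewrite !gt_eqF.
have h1 := ln_lb (divr_gt0 a0' b0).
have h2 : c * (a / b - 1) <= -1.
  have e2 : c * (a / b - 1) = (c * a - c * b) / b by field; rewrite gt_eqF.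
  rewrite e2 ler_pdivrMr //; lra.
have := ler_wpM2l (ltW c0) h1; rewrite e; lra.
Qed.

Section UB.
Variables (n k r : nat).
Local Notation K := k.+2.

Definition kw (i : 'I_n) (o : observation n K) : bool :=
  if o.2 then o.1.1 i != o.1.2 else o.1.1 i == o.1.2.
Definition err i (h : seq (observation n K)) := count (kw i) h.
Definition wt i h : nat := if (err i h <= r)%N then (2 ^ (r - err i h))%N else 0%N.
Definition lw h (x : inst n K) (y : 'I_K) : nat := (\sum_(i | x i == y) wt i h)%N.
Definition Wt h : nat := (\sum_i wt i h)%N.
Definition LU : learner n K := fun h x => [arg max_(y > ord0) lw h x y].

Lemma wt_step i h o :
  (2 * wt i (rcons h o) <= (if kw i o then wt i h else 2 * wt i h))%N.
Proof.
rewrite /wt /err -cats1 count_cat /= addn0; case: (kw i o); last by rewrite addn0.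
rewrite addn1; set e := count (kw i) h.
case: ifP => he; last by rewrite muln0.
have he' : (e <= r)%N by apply: ltnW.
rewrite he'; have -> : (r - e = (r - e.+1).+1)%N by lia.
by rewrite expnS.
Qed.

Lemma wt_le i h o : (wt i (rcons h o) <= wt i h)%N.
Proof.
have := wt_step i h o; case: (kw i o) => H; lia.
Qed.

Lemma Wt_le h o : (Wt (rcons h o) <= Wt h)%N.
Proof. by apply: leq_sum => i _; apply: wt_le. Qed.

Lemma Wt_mis h x yh : (2 * Wt (rcons h (x, yh, false)) + lw h x yh <= 2 * Wt h)%N.
Proof.
rewrite /Wt /lw !big_distrr /= [X in (_ + X <= _)%N]big_mkcond -big_split /=.
apply: leq_sum => i _; have := wt_step i h (x, yh, false); rewrite /kw /=.
case: (x i == yh) => H; move: H; set a := wt i _; set b := wt i h; move=> H; lia.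
Qed.

Lemma lw_sum h x : (\sum_(y : 'I_K) lw h x y)%N = Wt h.
Proof.
rewrite /Wt (partition_big x xpredT) //=.
Qed.

Lemma LU_max h x y : (lw h x y <= lw h x (LU h x))%N.
Proof.
rewrite /LU; case: arg_maxnP => // z _ H; exact: H.
Qed.

Lemma LU_frac h x : (Wt h <= K * lw h x (LU h x))%N.
Proof.
rewrite -(lw_sum h x).
have -> : (K * lw h x (LU h x) = \sum_(y : 'I_K) lw h x (LU h x))%N
  by rewrite sum_nat_const card_ord.
by apply: leq_sum => y _; apply: LU_max.
Qed.

Lemma Wt_pos b h : (err b h <= r)%N -> (1 <= Wt h)%N.
Proof.
move=> hb; rewrite /Wt (bigD1 b) //=; rewrite /wt hb.
have := expn_gt0 2 (r - err b h); lia.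
Qed.

Lemma nat_facts (W' W m : nat) : (2 * W' + m <= 2 * W)%N -> (W <= K * m)%N -> (1 <= W)%N ->
  (W' + 1 <= W)%N /\ (2 * K * W' + W <= 2 * K * W)%N.
Proof. move=> h1 h2 h3; split; nia. Qed.

Lemma run_bound b : forall S h, (err b h + expert_mistakes b S <= r)%N ->
  ((run_mistakes LU h S)%:R <= F (2 * K)%:R (Wt h)%:R :> RR).
Proof.
have c0 : (0 : RR) < (2 * K)%:R by rewrite ltr0n.
elim=> [|[x y] S IH] h hb /=; first by apply: F_ge0.
set yh := LU h x.
move: hb; rewrite /expert_mistakes /= -/(expert_mistakes b S) => hb.
have hb' : (err b (rcons h (x, yh, yh == y)) + expert_mistakes b S <= r)%N.
  rewrite /err -cats1 count_cat /= addn0 -/(err b h).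
  have : (kw b (x, yh, yh == y) <= (x b != y))%N.
    rewrite /kw /=; have [->|ny] := eqVneq yh y => //=.
    by case: eqP => // ->; rewrite ny.
  move=> H; rewrite -addnA; apply: leq_trans hb; by rewrite leq_add2l leq_add2r.
have IH' := IH _ hb'.
have hbh : (err b h <= r)%N by move: hb; set e := err b h; lia.
move: IH'; have [ey|ny] := eqVneq yh y => IH'.
  rewrite /= add0n.
  apply: le_trans IH' _; apply: F_mono => //; rewrite ler_nat; exact: Wt_le.
rewrite /= add1n.
have [f1 f2] := nat_facts (Wt_mis h x yh) (LU_frac h x) (Wt_pos hbh).
rewrite -addn1 natrD.
apply: (le_trans _ (F_step (a := (Wt (rcons h (x, yh, false)))%:R) c0 _ _ _)).
- by rewrite lerD2r.
- by [].
- by have := f1; rewrite -(ler_nat RR) natrD.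
- by rewrite -!natrM -natrD ler_nat.
Qed.
End UB.

Lemma ln2_bounds : 0 <= ln (2 : RR) <= 1.
Proof.
apply/andP; split; first by apply: ln_ge0; lra.
have := @ln_lb 2 ltac:(lra); lra.
Qed.

Lemma F_final (a m : RR) r : 0 < a -> a <= m ->
  F (2 * a) (m * 2 ^+ r) <= 2 * a * (ln (m / a) + r%:R + 1).
Proof.
move=> a0 am.
have m0 : 0 < m by lra.
have l0 : 0 <= ln (m / a) by apply: ln_ge0; rewrite ler_pdivlMr // mul1r.
have r0 : (0 : RR) <= r%:R by [].
have [l2a l2b] := andP ln2_bounds.
have p0 : (0 : RR) < 2 ^+ r by apply: exprn_gt0.
rewrite /F; have [hw|hw] := leP (m * 2 ^+ r) (2 * a).
  apply: le_trans hw _; rewrite -{1}(mulr1 (2 * a)); apply: ler_wpM2l; lra.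
have e : m * 2 ^+ r / (2 * a) = (m / a) * (2 ^+ r / 2).
  by field; rewrite gt_eqF.
rewrite e lnM ?posrE ?divr_gt0 //.
have e2 : ln (2 ^+ r / 2) = ln 2 *+ r - ln (2 : RR).
  rewrite ln_div ?posrE // ?lnXn //; lra.
rewrite e2.
have : ln 2 *+ r <= r%:R :> RR.
  rewrite -[ln 2 *+ r]mulr_natr; nra.
move=> h1.
have h2 : ln (m / a) + (ln 2 *+ r - ln 2) <= ln (m / a) + r%:R by lra.
have := ler_wpM2l (ltW (mulr_gt0 (ltr0n _ 2) a0 : (0 : RR) < 2 * a)) h2.
have : (0 : RR) < 2 by lra.
move=> _ h3; nra.
Qed.

Lemma nat_combo (K j r : nat) : (2 <= K)%N ->
  (K * (j + r + 2) <= 8 * (K./2 * j + (K * r.+1 - 1)))%N.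
Proof.
move=> hK; have h := odd_double_half K; rewrite -muln2 in h.
move: h; set q := K./2; set o := odd K => h.
have ho : (o <= 1)%N by rewrite /o; case: (odd K).
nia.
Qed.

Lemma ln_le_j (n K j : nat) : (0 < K)%N -> (0 < n)%N -> (n < K * 2 ^ j.+1)%N ->
  ln (n%:R / K%:R : RR) <= j.+1%:R.
Proof.
move=> K0 n0 hn.
have hlt : (n%:R / K%:R : RR) <= 2 ^+ j.+1.
  rewrite ler_pdivrMr ?ltr0n // -natrX -natrM ler_nat mulnC; exact: ltnW.
have [l2a l2b] := andP ln2_bounds.
apply: (le_trans (y := ln (2 ^+ j.+1))).
  rewrite ler_ln ?posrE ?divr_gt0 ?ltr0n ?exprn_gt0 //; lra.
rewrite lnXn; last lra.
rewrite -[ln 2 *+ j.+1]mulr_natr.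
have : (0 : RR) <= j.+1%:R by [].
nra.
Qed.

Lemma Wt_nil n k r : @Wt n k r [::] = (n * 2 ^ r)%N.
Proof.
rewrite /Wt (eq_bigr (fun _ => 2 ^ r)%N); first by rewrite sum_nat_const card_ord.
by move=> i _; rewrite /wt /err /= subn0.
Qed.

Theorem theorem4p1 :
  exists c C : Rdefinitions.R, 0 < c /\ c <= C /\
    forall n k r : nat, (2 <= k)%N -> (k <= n)%N ->
      ((c * k%:R * (ln (n%:R / k%:R) + r%:R + 1))%:E <= opt_bandit_det n k r)%E /\
      (opt_bandit_det n k r <= (C * k%:R * (ln (n%:R / k%:R) + r%:R + 1))%:E)%E.
Proof.
exists (1/16), 2; split; first lra; split; first lra.
move=> n k r hk hkn.
case: k hk hkn => [|[|k]] // _ hkn.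
have K0 : (0 < k.+2)%N by [].
have n0 : (0 < n)%N by apply: leq_trans hkn.
split.
- apply: le_ereal_inf_tmp => _ [L _ <-].
  set j := trunc_log 2 (n %/ k.+2).
  have hdiv : (0 < n %/ k.+2)%N by rewrite divn_gt0.
  have hj1 : (k.+2 * 2 ^ j <= n)%N.
    have h := trunc_logP (isT : (1 < 2)%N) hdiv; rewrite -/j in h.
    apply: leq_trans (leq_trunc_div n k.+2); by rewrite mulnC leq_mul2r h orbT.
  have hj2 : (n < k.+2 * 2 ^ j.+1)%N.
    have h := @trunc_log_ltn 2 (n %/ k.+2) isT; rewrite -/j ltn_divLR // mulnC in h.
    exact: h.
  have [S1 [P1 M1]] := LB_elim r L hj1.
  have [S2 [P2 M2]] := LB_r r L hkn.
  have u1 : (((mistakes L S1)%:R : RR)%:E <= ereal_sup [set ((mistakes L S)%:R)%:E | S in @P_r n k.+2 r])%E.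
    by apply: ereal_sup_ubound; exists S1.
  have u2 : (((mistakes L S2)%:R : RR)%:E <= ereal_sup [set ((mistakes L S)%:R)%:E | S in @P_r n k.+2 r])%E.
    by apply: ereal_sup_ubound; exists S2.
  have hl := ln_le_j K0 n0 hj2.
  have hc := nat_combo j r (isT : (2 <= k.+2)%N).
  have hc2 : (k.+2 * (j + r + 2) <= 8 * (mistakes L S1 + mistakes L S2))%N.
    apply: leq_trans hc _; rewrite leq_mul2l /=; exact: leq_add M1 M2.
  move: hc2; rewrite -(ler_nat RR) !natrM !natrD => hc2.
  have lr0 : 0 <= ln (n%:R / k.+2%:R : RR).
    by apply: ln_ge0; rewrite ler_pdivlMr ?ltr0n // mul1r ler_nat.
  have X : 1 / 16 * k.+2%:R * (ln (n%:R / k.+2%:R) + r%:R + 1)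
      <= ((mistakes L S1)%:R + (mistakes L S2)%:R) / 2 :> RR.
    have k0 : (0 : RR) <= k.+2%:R by [].
    move: hc2 hl; set a := ln _; set K := k.+2%:R; set m1 := (mistakes L S1)%:R;
      set m2 := (mistakes L S2)%:R; set jj := j%:R; set rr := r%:R.
    move=> hc2 hl.
    have hl' : a <= jj + 1 by move: hl; rewrite -natr1.
    have hp : 0 <= K * (jj + 1 - a) by apply: mulr_ge0 => //; lra.
    nra.
  have [h1|h2] : 1 / 16 * k.+2%:R * (ln (n%:R / k.+2%:R) + r%:R + 1) <= (mistakes L S1)%:R :> RR
      \/ 1 / 16 * k.+2%:R * (ln (n%:R / k.+2%:R) + r%:R + 1) <= (mistakes L S2)%:R :> RR.
    have [h|h] := leP ((mistakes L S2)%:R : RR) (mistakes L S1)%:R; [left|right]; lra.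
    by apply: (le_trans _ u1); rewrite lee_fin.
  by apply: (le_trans _ u2); rewrite lee_fin.
- apply: ge_ereal_inf.
  exists (ereal_sup [set ((mistakes (@LU n k r) S)%:R)%:E | S in @P_r n k.+2 r]).
    by exists (@LU n k r).
  apply: ge_ereal_sup => _ [S [b hb] <-]; rewrite lee_fin.
  have hb0 : (@err n k b [::] + expert_mistakes b S <= r)%N by [].
  rewrite /mistakes; apply: (le_trans (run_bound hb0)).
  rewrite Wt_nil !natrM natrX; apply: F_final; first by rewrite ltr0n.
  by rewrite ler_nat.
Qed.
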